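(* Let $C$ be a coalgebra over a field $K$, and write the right socle of $C$ as $s(C^C)=\bigoplus_{j\in J}T_j$ with $T_j$ simple right subcomodules, and $C=\bigoplus_{j\in J}E(T_j)$ as right $C$-comodules, where $E(T_j)\subseteq C$ is an injective envelope of $T_j$. Let $J_0=\{j\in J\mid \mathrm{Rat}(E(T_j)^* )\neq 0\}$. If $C\cong\mathrm{Rat}(C^*_{C^*})$ as right $C^*$-modules, then ${}^{C}C\cong \mathrm{Rat}\big(\prod_{j\in J_0}E(T_j)^*\big)$, i.e. $C$ is isomorphic as a right $C^*$-module (left $C$-comodule) to the rational part of the right $C^*$-module $\prod_{j\in J_0}E(T_j)^*$.
   Context: $C^*$ is the dual algebra with convolution. $C$ is a right $C^*$-module via $c\cdot c^*=c^*(c_1)c_2$ (equivalently a left $C$-comodule, denoted ${}^CC$); $C^C$ denotes $C$ as a right comodule. A right comodule $M$ is a left $C^*$-module via $c^*\cdot m=m_0c^*(m_1)$ and $M^*$ is a right $C^*$-module via $(\alpha\cdot c^* )(m)=\alpha(c^*\cdot m)$. For a right $C^*$-module $N$, $\mathrm{Rat}(N)$ is the largest submodule whose action comes from a left $C$-comodule structure ($n\cdot c^*=c^*(n_{-1})n_0$). *)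

(* Defs.v *)
From HB Require Import structures.
From mathcomp Require Import all_boot all_order all_algebra.
From mathcomp Require Import boolp classical_sets functions.
From Stdlib Require List.
Set Implicit Arguments. Unset Strict Implicit. Unset Printing Implicit Defensive.
Import GRing.Theory.
Local Open Scope ring_scope.
Local Open Scope classical_set_scope.

Definition lin_fun (K : fieldType) (V : lmodType K) (f : V -> K) :=
  forall (a : K) (x y : V), f (a *: x + y) = a * f x + f y.

Definition lin_on (K : fieldType) (V : lmodType K) (E : set V) (f : V -> K) :=
  forall (a : K) (x y : V), E x -> E y -> f (a *: x + y) = a * f x + f y.

(* There is no tensor product of (infinite-dimensional) vector spaces  *)
(* in the library; the comultiplication  Delta c = sum c_1 (x) c_2  is  *)
(* given by a chosen finite representative  delta c : seq (V * V), and *)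
(* all identities in V (x) V, V (x) V (x) V are stated after applying   *)
(* arbitrary elementary tensors f (x) g (x) h of linear functionals,    *)
(* which separate points of tensor products over a field.              *)

Record coalg (K : fieldType) (V : lmodType K) := Coalg {
  delta : V -> seq (V * V);
  eps : V -> K;
  eps_lin : lin_fun eps;
  delta_lin : forall f g : V -> K, lin_fun f -> lin_fun g ->
     lin_fun (fun c => \sum_(p <- delta c) f p.1 * g p.2);
  delta_coassoc : forall (f g h : V -> K), lin_fun f -> lin_fun g -> lin_fun h ->
     forall c,
     \sum_(p <- delta c) (\sum_(q <- delta p.1) f q.1 * g q.2) * h p.2
     = \sum_(p <- delta c) f p.1 * (\sum_(q <- delta p.2) g q.1 * h q.2);
  counit_l : forall c, \sum_(p <- delta c) eps p.1 *: p.2 = c;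
  counit_r : forall c, \sum_(p <- delta c) eps p.2 *: p.1 = c }.

Section CoalgDefs.
Variables (K : fieldType) (V : lmodType K) (C : coalg V).

(* left C^*-action on C^C :  c^* . c = c_1 c^*(c_2) *)
Definition lact (cs : V -> K) (c : V) : V :=
  \sum_(p <- delta C c) cs p.2 *: p.1.

(* right C^*-action on C (i.e. on the left comodule ^C C): c . c^* = c^*(c_1) c_2 *)
Definition ract (c : V) (cs : V -> K) : V :=
  \sum_(p <- delta C c) cs p.1 *: p.2.

Definition conv (f g : V -> K) : V -> K :=
  fun c => \sum_(p <- delta C c) f p.1 * g p.2.

Definition subspace (D : set V) :=
  D 0 /\ forall (a : K) x y, D x -> D y -> D (a *: x + y).

(* right subcomodule  D <= C^C :  Delta(D) <= D (x) C, i.e. Delta(d) is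
   killed by f (x) g whenever f vanishes on D *)
Definition subcomod (D : set V) :=
  subspace D /\
  forall (f g : V -> K), lin_fun f -> lin_fun g -> (forall d, D d -> f d = 0) ->
  forall d, D d -> \sum_(p <- delta C d) f p.1 * g p.2 = 0.

Definition zero_set (D : set V) := forall x, D x -> x = 0.

Definition simple_subcomod (T : set V) :=
  subcomod T /\ ~ zero_set T /\
  forall D, subcomod D -> D `<=` T -> zero_set D \/ (forall x, T x -> D x).

Definition fsums (I : Type) (F : I -> set V) : set V :=
  [set x | exists s : seq (I * V),
     (forall p, List.In p s -> F p.1 p.2) /\ x = \sum_(p <- s) p.2].

Definition independent (I : Type) (F : I -> set V) :=
  forall s : seq (I * V), List.NoDup (map fst s) ->
    (forall p, List.In p s -> F p.1 p.2) ->
    \sum_(p <- s) p.2 = 0 -> forall p, List.In p s -> p.2 = 0.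

Definition is_dsum (I : Type) (F : I -> set V) (S : set V) :=
  independent F /\ forall x, S x <-> fsums F x.

Definition socle : set V :=
  fsums (fun T : {T : set V | simple_subcomod T} => proj1_sig T).

(* injective subcomodule of C^C (a subcomodule of the
   injective comodule C^C is injective iff it is a direct summand) *)
Definition inj_subcomod (E : set V) :=
  subcomod E /\ exists D, subcomod D /\
     independent (fun b : bool => if b then E else D) /\
     forall x, fsums (fun b : bool => if b then E else D) x.

(* E <= C is an injective envelope of T: T <= E essential, E injective *)
Definition inj_envelope (T E : set V) :=
  inj_subcomod E /\ T `<=` E /\
  forall D, subcomod D -> D `<=` E -> ~ zero_set D -> ~ zero_set (D `&` T).

(* A right C^*-module is given inside an ambient K-vector space N by   *)
(* a subspace M and an action act : N -> C^* -> N (relevant on M).     *)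

Section RatDef.
Variables (N : lmodType K) (M : set N) (act : N -> (V -> K) -> N).

Definition submod (P : set N) :=
  P `<=` M /\ P 0 /\ (forall (a : K) x y, P x -> P y -> P (a *: x + y)) /\
  forall x cs, lin_fun cs -> P x -> P (act x cs).

(* the action on P comes from a left C-comodule structure:
   n . c^* = c^*(n_{-1}) n_0 *)
Definition rational (P : set N) :=
  forall n, P n -> exists s : seq (V * N),
    (forall p, List.In p s -> P p.2) /\
    forall cs, lin_fun cs -> act n cs = \sum_(p <- s) cs p.1 *: p.2.

(* Rat(M): the largest rational submodule = sum (union) of rational submodules *)
Definition Rat : set N :=
  [set n | exists P, submod P /\ rational P /\ P n].

Definition iso_to_Rat :=
  exists phi : V -> N,
    (forall (a : K) x y, phi (a *: x + y) = a *: phi x + phi y) /\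
    injective phi /\
    (forall n, Rat n <-> exists c, phi c = n) /\
    forall c cs, lin_fun cs -> phi (ract c cs) = act (phi c) cs.

End RatDef.

Definition dualC : set (V -> K^o) := [set f | lin_fun f].
Definition dualC_act (f : V -> K^o) (cs : V -> K) : V -> K^o := conv f cs.

(* E^* for a subcomodule E <= C: a functional on E is represented by the
   unique function V -> K that is linear on E and vanishes off E. *)
Definition dualE (E : set V) : set (V -> K^o) :=
  [set f | lin_on E f /\ forall x, ~ E x -> f x = 0].
Definition dualE_act (E : set V) (f : V -> K^o) (cs : V -> K) : V -> K^o :=
  fun x => if `[< E x >] then f (lact cs x) else 0.

Definition J0 (J : Type) (E : J -> set V) : set J :=
  [set j | exists f, Rat (dualE (E j)) (dualE_act (E j)) f /\ f <> 0].

(* prod_{j in J0} E_j^* , represented inside J -> (V -> K) with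
   zero components outside J0; action componentwise. *)
Definition prodDual (J : Type) (E : J -> set V) : set (J -> V -> K^o) :=
  [set a | forall j, (J0 E j -> dualE (E j) (a j)) /\ (~ J0 E j -> a j = 0)].
Definition prodDual_act (J : Type) (E : J -> set V)
  (a : J -> V -> K^o) (cs : V -> K) : J -> V -> K^o :=
  fun j => dualE_act (E j) (a j) cs.

End CoalgDefs.

(* Main.v *)
Require Import Defs.
From mathcomp Require Import all_boot all_order all_algebra.
From mathcomp Require Import boolp classical_sets functions.
Set Implicit Arguments. Unset Strict Implicit. Unset Printing Implicit Defensive.
Import GRing.Theory.
Local Open Scope ring_scope.
Local Open Scope classical_set_scope.

Section Sep.
Variables (K : fieldType) (W : lmodType K).

Definition clos (D : set W) := forall (a : K) x z, D x -> D z -> D (a *: x + z).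

Lemma sep (E : set W) (y : W) :
  E 0 -> clos E -> ~ E y ->
  exists f : W -> K, lin_fun f /\ (forall x, E x -> f x = 0) /\ f y = 1.
Proof.
move=> E0 Ecl Ey.
pose P := fun D : set W => ~ D y /\ clos D /\ (D = set0 \/ E `<=` D).
have [A [[Ay [Acl AE]] Amax]] : exists A, P A /\ forall B, A `<` B -> ~ P B.
  apply: Zorn_bigcup => F FP Ftot; split; [|split].
  - by move=> [X FX Xy]; have [] := FP X FX.
  - move=> a x z [X FX Xx] [Z FZ Zz].
    have [XZ|ZX] := Ftot X Z FX FZ.
    + by exists Z => //; have [_ [cl _]] := FP Z FZ; apply: cl => //; exact: XZ.
    + by exists X => //; have [_ [cl _]] := FP X FX; apply: cl => //; exact: ZX.
  - have [[X FX EX]|none] := pselect (exists2 X, F X & E `<=` X).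
      by right => x Ex; exists X => //; exact: EX.
    left; apply/seteqP; split=> [x [X FX Xx]|x []].
    have [_ [_ [X0|EX]]] := FP X FX; first by rewrite X0 in Xx.
    by exfalso; apply: none; exists X.
have {AE}EA : E `<=` A.
  case: AE => // A0; exfalso; apply: (Amax E); last by split=> //; split=> //; right.
  rewrite A0; split; first by [].
  by move=> /(_ 0 E0).
have A0 : A 0 by exact: (EA).
have Aopp : forall d, A d -> A (- d).
  by move=> d Ad; have := Acl (-1) d 0 Ad A0; rewrite addr0 scaleN1r.
have dec : forall w, exists a d, A d /\ w = d + a *: y.
  move=> w; apply: contrapT => nw.
  pose B := fun u => exists d b, A d /\ u = d + b *: w.
  apply: (Amax B).
    split; first by move=> d Ad; exists d, 0; rewrite scale0r addr0.
    move=> /(_ w) BA; apply: nw; exists 0, w; rewrite scale0r addr0; split => //.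
    by apply: BA; exists 0, 1; rewrite add0r scale1r.
  split; [|split].
  - move=> [d [b [Ad yE]]]; have [b0|bn0] := eqVneq b 0.
      by apply: Ay; rewrite yE b0 scale0r addr0.
    apply: nw; exists b^-1, ((- b^-1) *: d + 0); split; first by apply: (Acl).
    rewrite yE addr0 scalerDr scalerA mulVf // scale1r scaleNr addrA addNr add0r //.
  - move=> a x z [d1 [b1 [A1 ->]]] [d2 [b2 [A2 ->]]].
    exists (a *: d1 + d2), (a * b1 + b2); split; first exact: (Acl).
    by rewrite scalerDr scalerA scalerDl addrACA.
  - by right => x Ex; exists x, 0; rewrite scale0r addr0; split => //; exact: (EA).
have uniq : forall a1 a2 d1 d2, A d1 -> A d2 -> d1 + a1 *: y = d2 + a2 *: y -> a1 = a2.
  move=> a1 a2 d1 d2 A1 A2 e; apply: contrapT => ne; apply: Ay.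
  have ne' : a1 - a2 != 0 by rewrite subr_eq0; apply/eqP.
  have : y = (a1 - a2)^-1 *: (d2 - d1).
    apply: (@scalerI _ _ (a1 - a2)) => //.
    rewrite scalerA mulfV // scale1r scalerBl.
    apply/eqP; rewrite subr_eq -addrA (addrC (- d1)) addrA -e [d1 + _]addrC addrK eqxx //.
  move=> ->; rewrite -[_ *: _]addr0; apply: (Acl) => //.
  by rewrite -[d2 in d2 - d1]scale1r; apply: (Acl) => //; exact: (Aopp).
pose f := fun w => projT1 (cid (dec w)).
have fP : forall w, exists d, A d /\ w = d + f w *: y by move=> w; exact: (projT2 (cid (dec w))).
have fE : forall w a d, A d -> w = d + a *: y -> f w = a.
  move=> w a d Ad e; have [d' [Ad' e']] := fP w.
  by apply: (uniq _ _ d' d) => //; rewrite -e -e'.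
exists f; split; [|split].
- move=> a x z; have [dx [Ax ex]] := fP x; have [dz [Az ez]] := fP z.
  apply: (fE _ _ (a *: dx + dz)); first exact: (Acl).
  by rewrite {1}ex {1}ez scalerDr scalerA scalerDl addrACA.
- by move=> x Ex; apply: (fE _ _ x); [exact: (EA) | rewrite scale0r addr0].
- by apply: (fE _ _ 0) => //; rewrite scale1r add0r.
Qed.

Lemma lin0 (f : W -> K) : lin_fun f -> f 0 = 0.
Proof.
move=> lf; have := lf 1 0 0; rewrite scaler0 addr0 mul1r => h.
by apply: (@addrI _ (f 0)); rewrite addr0 -h.
Qed.

Lemma linD (f : W -> K) : lin_fun f -> forall x y, f (x + y) = f x + f y.
Proof. by move=> lf x y; rewrite -[x in LHS]scale1r lf mul1r. Qed.

Lemma linZ (f : W -> K) : lin_fun f -> forall a x, f (a *: x) = a * f x.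
Proof. by move=> lf a x; rewrite -[a *: x]addr0 lf lin0 // addr0. Qed.

Lemma lin_sum (f : W -> K) (I : Type) (s : seq I) (F : I -> W) :
  lin_fun f -> f (\sum_(i <- s) F i) = \sum_(i <- s) f (F i).
Proof.
move=> lf; elim: s => [|i s IH]; first by rewrite !big_nil lin0.
by rewrite !big_cons linD // IH.
Qed.

Lemma lin_on0 (E : set W) (f : W -> K) : E 0 -> lin_on E f -> f 0 = 0.
Proof.
move=> E0 lf; have := lf 1 0 0 E0 E0; rewrite scaler0 addr0 mul1r => h.
by apply: (@addrI _ (f 0)); rewrite addr0 -h.
Qed.

Lemma lin_onD (E : set W) (f : W -> K) : lin_on E f ->
  forall x y, E x -> E y -> f (x + y) = f x + f y.
Proof. by move=> lf x y Ex Ey; rewrite -[x in LHS]scale1r lf // mul1r. Qed.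

Lemma lin_onZ (E : set W) (f : W -> K) : E 0 -> lin_on E f ->
  forall a x, E x -> f (a *: x) = a * f x.
Proof. by move=> E0 lf a x Ex; rewrite -[a *: x]addr0 lf // (lin_on0 E0 lf) addr0. Qed.

End Sep.

Lemma eq_big_In (R : nmodType) (I : Type) (s : seq I) (F G : I -> R) :
  (forall p, List.In p s -> F p = G p) -> \sum_(p <- s) F p = \sum_(p <- s) G p.
Proof.
elim: s => [|i s IH] h; first by rewrite !big_nil.
rewrite !big_cons h /=; last by left.
by rewrite IH // => p ps; apply: h; right.
Qed.

Section Main.
Variables (K : fieldType) (V : lmodType K) (C : coalg V) (J : Type) (E : J -> set V).
Hypothesis HEsub : forall j, subcomod C (E j).
Hypothesis HCd : is_dsum E setT.

Lemma E0 j : E j 0. Proof. by have [[h _] _] := HEsub j. Qed.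
Lemma Ecl j : clos (E j).
Proof. by have [[_ h] _] := HEsub j; move=> a x z; apply: h. Qed.

Lemma lact_fun (f cs : V -> K) x : lin_fun f ->
  f (lact C cs x) = \sum_(p <- delta C x) f p.1 * cs p.2.
Proof.
move=> lf; rewrite /lact lin_sum //; apply: eq_bigr => p _.
by rewrite linZ // mulrC.
Qed.

Lemma Estab j cs x : lin_fun cs -> E j x -> E j (lact C cs x).
Proof.
move=> lcs Ex; apply: contrapT => nE.
have [f [lf [fE f1]]] := sep (E0 j) (@Ecl j) nE.
have [_ h] := HEsub j.
have := h f cs lf lcs fE x Ex.
by rewrite -lact_fun // f1 => /eqP; rewrite oner_eq0.
Qed.

Lemma Rat_range (N : lmodType K) (M : set N) (act : N -> (V -> K) -> N) (g : V -> N) :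
  (forall (a : K) x y, g (a *: x + y) = a *: g x + g y) ->
  (forall c, M (g c)) ->
  (forall c cs, lin_fun cs -> g (ract C c cs) = act (g c) cs) ->
  forall c, Defs.Rat M act (g c).
Proof.
move=> glin gM gact c.
have g0 : g 0 = 0.
  have := glin 1 0 0; rewrite scaler0 addr0 scale1r => h.
  by apply: (@addrI _ (g 0)); rewrite addr0 -h.
have gsum : forall (I : Type) (s : seq I) (F : I -> V), g (\sum_(i <- s) F i) = \sum_(i <- s) g (F i).
  move=> I s F; elim: s => [|i s IH]; first by rewrite !big_nil.
  by rewrite !big_cons -[F i]scale1r glin !scale1r IH.
have gZ : forall a x, g (a *: x) = a *: g x by move=> a x; rewrite -[a *: x]addr0 glin g0 addr0.
exists (range g); split; [|split]; last by exists c.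
- split; first by move=> _ [x _ <-].
  split; first by exists 0.
  split; first by move=> a _ _ [x _ <-] [y _ <-]; exists (a *: x + y) => //; rewrite glin.
  by move=> _ cs lcs [x _ <-]; exists (ract C x cs) => //; rewrite gact.
- move=> _ [x _ <-]; exists (map (fun p => (p.1, g p.2)) (delta C x)); split.
    by move=> p /List.in_map_iff [q [<- _]]; exists q.2.
  move=> cs lcs; rewrite -gact // /ract gsum big_map; apply: eq_bigr => p _.
  by rewrite gZ.
Qed.


Variable psi : V -> (V -> K^o).
Hypothesis psi_lin : forall (a : K) x y, psi (a *: x + y) = a *: psi x + psi y.
Hypothesis psi_inj : injective psi.
Hypothesis psi_rat : forall n, Defs.Rat (dualC (V:=V)) (dualC_act C) n <-> exists c, psi c = n.
Hypothesis psi_act : forall c cs, lin_fun cs -> psi (ract C c cs) = dualC_act C (psi c) cs.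

Lemma psi_lf c : lin_fun (psi c).
Proof.
have [P [[PM _] [_ Pc]]] : Defs.Rat (dualC (V:=V)) (dualC_act C) (psi c).
  by apply/psi_rat; exists c.
exact: PM.
Qed.

Definition r j c : V -> K^o := fun x => if `[< E j x >] then psi c x else 0.

Lemma r_lin j (a : K) x y : r j (a *: x + y) = a *: r j x + r j y.
Proof.
apply/funext => z; rewrite /r addrfctE scalrfctE /=.
case: (`[< E j z >]) => //.
  by rewrite psi_lin.
by rewrite scaler0 addr0.
Qed.

Lemma r_in j c : dualE (E j) (r j c).
Proof.
split.
  move=> a x y Ex Ey; rewrite /r asboolT; last exact: Ecl.
  by rewrite (asboolT Ex) (asboolT Ey) (psi_lf c).
by move=> x nE; rewrite /r asboolF.
Qed.

Lemma conv_lact (f cs : V -> K) x : lin_fun f -> conv C f cs x = f (lact C cs x).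
Proof. by move=> lf; rewrite lact_fun. Qed.

Lemma r_act j c cs : lin_fun cs -> dualE_act C (E j) (r j c) cs = r j (ract C c cs).
Proof.
move=> lcs; apply/funext => x; rewrite /dualE_act /r.
case: (pselect (E j x)) => Ex; last by rewrite !asboolF.
rewrite !asboolT //; last exact: Estab.
by rewrite psi_act // /dualC_act conv_lact //; exact: psi_lf.
Qed.

Lemma r_Rat j c : Defs.Rat (dualE (E j)) (dualE_act C (E j)) (r j c).
Proof.
apply: (Rat_range (g := r j)) => //; first exact: r_lin; first exact: r_in.
by move=> c' cs lcs; rewrite r_act.
Qed.

Lemma G1 j c x : ~ J0 C E j -> E j x -> psi c x = 0.
Proof.
move=> nJ Ex; have : r j c = 0.
  apply: contrapT => nz; apply: nJ; exists (r j c); split => //; exact: r_Rat.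
by move=> /(congr1 (fun f => f x)); rewrite /r asboolT.
Qed.

Definition phi c : J -> V -> K^o := fun j => if `[< J0 C E j >] then r j c else 0.

Lemma phi_lin (a : K) x y : phi (a *: x + y) = a *: phi x + phi y.
Proof.
apply/funext => j; rewrite /phi addrfctE scalrfctE /=; case: (`[< J0 C E j >]) => //.
  by rewrite r_lin.
by rewrite scaler0 addr0.
Qed.

Lemma phi_in c : prodDual C E (phi c).
Proof.
move=> j; split => h; rewrite /phi.
  by rewrite asboolT //; exact: r_in.
by rewrite asboolF.
Qed.

Lemma phi_act c cs : lin_fun cs -> prodDual_act C E (phi c) cs = phi (ract C c cs).
Proof.
move=> lcs; apply/funext => j; rewrite /prodDual_act /phi.
case: (pselect (J0 C E j)) => h; first by rewrite asboolT // r_act.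
rewrite asboolF //; apply/funext => x; rewrite /dualE_act.
by case: (`[< E j x >]).
Qed.

Lemma phi_Rat c : Defs.Rat (prodDual C E) (prodDual_act C E) (phi c).
Proof.
apply: (Rat_range (g := phi)); first exact: phi_lin; first exact: phi_in.
by move=> c' cs lcs; rewrite phi_act.
Qed.

Lemma psi_phi c j v : E j v -> psi c v = phi c j v.
Proof.
move=> Ev; rewrite /phi; case: (pselect (J0 C E j)) => h.
  by rewrite asboolT // /r asboolT.
by rewrite asboolF // (G1 c h Ev).
Qed.

Lemma decomp x : exists s : seq (J * V),
  (forall p, List.In p s -> E p.1 p.2) /\ x = \sum_(p <- s) p.2.
Proof. by have [_ h] := HCd; have [h1 _] := h x; exact: h1. Qed.

Lemma phi_inj : injective phi.
Proof.
move=> c c' e; apply: psi_inj; apply/funext => x.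
have [s [sE ->]] := decomp x.
rewrite !lin_sum; try exact: psi_lf.
apply: eq_big_In => p ps.
by rewrite !(psi_phi _ (sE p ps)) e.
Qed.


Definition inE (s : seq (J * V)) := forall p, List.In p s -> E p.1 p.2.
Definition good (m : J -> V -> K^o) := forall j, lin_on (E j) (m j).

Fixpoint ins (q : J * V) (t : seq (J * V)) : seq (J * V) :=
  match t with
  | [::] => [:: q]
  | p :: r => if `[< p.1 = q.1 >] then (p.1, p.2 + q.2) :: r else p :: ins q r
  end.

Lemma ins_fst q t x : List.In x (map fst (ins q t)) -> x = q.1 \/ List.In x (map fst t).
Proof.
elim: t => [|p r IH] /=; first by case=> // -> ; left.
case: (pselect (p.1 = q.1)) => h; first by rewrite asboolT //= => [[<-|]]; [right; left | right; right].
rewrite asboolF //= => [[<-|/IH [|]]]; [right; left|left|right; right] => //.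
Qed.

Lemma ins_nodup q t : List.NoDup (map fst t) -> List.NoDup (map fst (ins q t)).
Proof.
elim: t => [|p r IH] /=; first by move=> _; constructor; [by []|constructor].
move=> nd; have [nin ndr] : ~ List.In p.1 (map fst r) /\ List.NoDup (map fst r).
  by inversion nd.
case: (pselect (p.1 = q.1)) => h; first by rewrite asboolT.
rewrite asboolF //=; constructor; last exact: IH.
by move=> /ins_fst [].
Qed.

Lemma ins_E q t : E q.1 q.2 -> inE t -> inE (ins q t).
Proof.
move=> Eq; elim: t => [|p r IH] tE /=; first by move=> p [<-|].
case: (pselect (p.1 = q.1)) => h.
  rewrite asboolT // => p' /= [<-|]; last by move=> ?; apply: tE; right.
  rewrite /= -[p.2]scale1r; apply: Ecl; first by apply: tE; left.
  by rewrite h.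
rewrite asboolF // => p' /= [<-|]; first by apply: tE; left.
by apply: IH => p'' ?; apply: tE; right.
Qed.

Lemma ins_sum q t : \sum_(p <- ins q t) p.2 = q.2 + \sum_(p <- t) p.2.
Proof.
elim: t => [|p r IH] /=; first by rewrite big_seq1 big_nil addr0.
case: (`[< p.1 = q.1 >]); rewrite !big_cons /=.
  by rewrite addrA [p.2 + _]addrC.
by rewrite IH addrCA.
Qed.

Lemma ins_m m q t : good m -> E q.1 q.2 -> inE t ->
  \sum_(p <- ins q t) m p.1 p.2 = m q.1 q.2 + \sum_(p <- t) m p.1 p.2.
Proof.
move=> gm Eq; elim: t => [|p r IH] tE /=; first by rewrite big_seq1 big_nil addr0.
case: (pselect (p.1 = q.1)) => h.
  rewrite asboolT // !big_cons /= (lin_onD (gm p.1)); first by rewrite addrA [m p.1 p.2 + _]addrC h.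
    by apply: tE; left.
  by rewrite h.
rewrite asboolF // !big_cons IH; first by rewrite addrCA.
by move=> p' ?; apply: tE; right.
Qed.

Lemma merge s : inE s -> exists s', [/\ List.NoDup (map fst s'), inE s',
  \sum_(p <- s') p.2 = \sum_(p <- s) p.2 &
  forall m, good m -> \sum_(p <- s') m p.1 p.2 = \sum_(p <- s) m p.1 p.2].
Proof.
elim: s => [|q t IH] sE.
  by exists [::]; split => //; constructor.
have [|t' [nd tE ts tm]] := IH; first by move=> p ?; apply: sE; right.
have Eq : E q.1 q.2 by apply: sE; left.
exists (ins q t'); split.
- exact: ins_nodup.
- exact: ins_E.
- by rewrite ins_sum big_cons ts.
- by move=> m gm; rewrite ins_m // big_cons tm.
Qed.

Lemma WD m s : good m -> inE s -> \sum_(p <- s) p.2 = 0 -> \sum_(p <- s) m p.1 p.2 = 0.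
Proof.
move=> gm sE s0; have [s' [nd s'E s's s'm]] := merge sE.
rewrite -s'm //; have [ind _] := HCd.
have z := ind s' nd s'E (etrans s's s0).
rewrite (eq_big_In (G := fun _ => 0)); first by rewrite big1.
by move=> p ps; rewrite (z p ps) (lin_on0 (E0 p.1) (gm p.1)).
Qed.

Definition rep x := projT1 (cid (decomp x)).
Lemma rep_spec x : inE (rep x) /\ x = \sum_(p <- rep x) p.2.
Proof. exact: (projT2 (cid (decomp x))). Qed.

Definition F (m : J -> V -> K^o) : V -> K^o := fun x => \sum_(p <- rep x) m p.1 p.2.

Lemma m_neg m j v : good m -> E j v -> m j (- v) = - m j v.
Proof.
by move=> gm Ev; rewrite -scaleN1r (lin_onZ (E0 j) (gm j)) // mulN1r.
Qed.

Lemma F_rep m s : good m -> inE s -> F m (\sum_(p <- s) p.2) = \sum_(p <- s) m p.1 p.2.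
Proof.
move=> gm sE; have [s0E s0e] := rep_spec (\sum_(p <- s) p.2).
rewrite /F; apply/eqP; rewrite -subr_eq0; apply/eqP.
set s0 := rep _ in s0E s0e *.
have := @WD m (s0 ++ map (fun p => (p.1, - p.2)) s) gm.
rewrite !big_cat !big_map /=.
rewrite (eq_big_In (F := fun p => m p.1 (- p.2)) (G := fun p => - m p.1 p.2)); last first.
  by move=> p ps; rewrite m_neg //; apply: sE.
rewrite !sumrN; apply.
  move=> p pin; case: (List.in_app_or _ _ _ pin) => [/s0E //|].
  case/List.in_map_iff => q [<- qs] /=.
  by rewrite -scaleN1r -[_ *: _]addr0; apply: Ecl; [apply: sE|exact: E0].
by rewrite -s0e subrr.
Qed.

Lemma F_E m j v : good m -> E j v -> F m v = m j v.
Proof.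
move=> gm Ev; have := @F_rep m [:: (j, v)] gm.
rewrite !big_seq1 /=; apply; by move=> p [<-|].
Qed.

Lemma F_lin m : good m -> lin_fun (F m).
Proof.
move=> gm a x y.
have [s1E ->] := rep_spec x; have [s2E ->] := rep_spec y.
set s1 := rep x; set s2 := rep y.
have e : a *: \sum_(p <- s1) p.2 + \sum_(p <- s2) p.2 =
   \sum_(p <- map (fun p => (p.1, a *: p.2)) s1 ++ s2) p.2.
  by rewrite big_cat big_map scaler_sumr.
rewrite e !F_rep //; last first.
  move=> p pin; case: (List.in_app_or _ _ _ pin) => [|/s2E //].
  case/List.in_map_iff => q [<- qs] /=.
  by rewrite -[_ *: _]addr0; apply: Ecl; [apply: s1E|exact: E0].
rewrite big_cat big_map mulr_sumr; congr (_ + _); apply: eq_big_In => p ps /=.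
by rewrite (lin_onZ (E0 p.1) (gm p.1)) //; apply: s1E.
Qed.

Lemma F_mlin (a : K) m m' : F (a *: m + m') = a *: F m + F m'.
Proof.
apply/funext => x; rewrite /F.
transitivity (\sum_(p <- rep x) (a * m p.1 p.2 + m' p.1 p.2)); first by apply: eq_bigr.
rewrite big_split /= -mulr_sumr //.
Qed.

Lemma F0 : F 0 = 0.
Proof. by apply/funext => x; rewrite /F big1. Qed.


Lemma F_sum (I : Type) (s : seq I) (a : I -> K) (f : I -> J -> V -> K^o) :
  F (\sum_(i <- s) a i *: f i) = \sum_(i <- s) a i *: F (f i).
Proof.
elim: s => [|i s IH]; first by rewrite !big_nil F0.
by rewrite !big_cons F_mlin IH.
Qed.

Lemma pd_good m : prodDual C E m -> good m.
Proof.
move=> pm j; have [h1 h2] := pm j; case: (pselect (J0 C E j)) => h.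
  by have [] := h1 h.
by rewrite h2 // => a x y _ _; rewrite /= mulr0 addr0.
Qed.

Lemma F_act m cs : prodDual C E m -> lin_fun cs ->
  dualC_act C (F m) cs = F (prodDual_act C E m cs).
Proof.
move=> pm lcs; have gm := pd_good pm; apply/funext => x.
have [xE xe] := rep_spec x.
transitivity (\sum_(p <- rep x) m p.1 (lact C cs p.2)); last first.
  rewrite /F; apply: eq_big_In => p ps.
  by rewrite /prodDual_act /dualE_act asboolT //; exact: xE.
transitivity (conv C (F m) cs (\sum_(p <- rep x) p.2)); first by rewrite -xe.
have Hl : lin_fun (conv C (F m) cs) by apply: delta_lin => //; exact: F_lin.
rewrite (lin_sum _ _ Hl); apply: eq_big_In => p ps.
rewrite conv_lact; last exact: F_lin.
by rewrite (F_E (j := p.1) gm) //; apply: Estab => //; exact: xE.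
Qed.

Lemma Rat_sub n : Defs.Rat (prodDual C E) (prodDual_act C E) n -> exists c, phi c = n.
Proof.
case=> P [[PM [P0 [Pcl Pact]]] [Prat Pn]].
pose P' := fun g : V -> K^o => exists m, P m /\ g = F m.
have : Defs.Rat (dualC (V:=V)) (dualC_act C) (F n).
  exists P'; split; [|split]; last by exists n.
  - split; first by move=> _ [m [Pm ->]]; exact: F_lin (pd_good (PM _ Pm)).
    split; first by exists 0; split => //; rewrite F0.
    split.
      move=> a _ _ [m [Pm ->]] [m' [Pm' ->]]; exists (a *: m + m'); split.
        exact: Pcl.
      by rewrite F_mlin.
    move=> _ cs lcs [m [Pm ->]]; exists (prodDual_act C E m cs); split.
      exact: Pact.
    exact: F_act (PM _ Pm) lcs.
  - move=> _ [m [Pm ->]]; have [s [sP se]] := Prat m Pm.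
    exists (map (fun p => (p.1, F p.2)) s); split.
      move=> p /List.in_map_iff [q [<- qs]]; exists q.2; split => //; exact: sP.
    move=> cs lcs; rewrite F_act //; last exact: PM.
    by rewrite se // F_sum big_map.
move/psi_rat => [c e]; exists c.
apply/funext => j; apply/funext => x; rewrite /phi.
have [hJ hnJ] := PM n Pn j.
case: (pselect (J0 C E j)) => h.
  rewrite asboolT // /r; case: (pselect (E j x)) => Ex.
    by rewrite asboolT // e (F_E (j := j) (pd_good (PM _ Pn))).
  by rewrite asboolF //; have [_ z] := hJ h; rewrite z.
by rewrite asboolF // hnJ.
Qed.

End Main.

Unset Implicit Arguments.
Set Strict Implicit.

Theorem corollary2p2 (K : fieldType) (V : lmodType K) (C : coalg V)
  (J : Type) (T E : J -> set V)
  (HT : forall j, simple_subcomod C (T j))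
  (Hsoc : is_dsum T (socle C))
  (HE : forall j, inj_envelope C (T j) (E j))
  (HC : is_dsum E setT)
  (Hiso : iso_to_Rat C (dualC (V:=V)) (dualC_act C)) :
  iso_to_Rat C (prodDual C E) (prodDual_act C E).
Proof.
have HEsub : forall j, subcomod C (E j) by move=> j; have [[]] := HE j.
case: Hiso => psi [plin [pinj [prat pact]]].
exists (phi C E psi); split; [|split; [|split]].
- exact: phi_lin.
- exact: (phi_inj HEsub HC plin pinj prat pact).
- move=> n; split; first exact: (Rat_sub HEsub HC prat).
  by move=> [c <-]; exact: (phi_Rat HEsub plin prat pact).
- by move=> c cs lcs; rewrite (phi_act HEsub prat pact).
Qed.
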